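(* Fix $\phi\in\mathbb{R}^d$ with $\mu=\|\phi\|^2>0$, a ground-truth class $y\in[V]$ with one-hot label ${\bm y}={\bm e}_y$, softmax cross-entropy $f({\bm z},{\bm y})=-\sum_k y_k\log p_k({\bm z})$ (with $L$ a uniform bound on the norms of its first three ${\bm z}$-derivatives), $\kappa\ge0$, and ${\bm W}^t\in\mathbb{R}^{V\times d}$. Let ${\bm z}^t={\bm W}^t\phi$, ${\bm p}^t=\mathrm{softmax}({\bm z}^t)$, ${\bm g}^t={\bm p}^t-{\bm y}$, ${\bm H}^t_{{\bm z}}=\mathrm{diag}({\bm p}^t)-{\bm p}^t({\bm p}^t)^\top$, $y^*=\arg\max_{j\neq y}p_j^t$. Let $S=p^t_y+p^t_{y^*}$, $\tau=1-S$, $\bar p_y=p^t_y/S$, $\Delta_{\mathrm{bin}}(\bar p_y)=4\bar p_y(1-\bar p_y)^2$, $B=\sqrt2$, and assume there exists $\gamma_0>0$ with $$\frac{4Be^2}{p^t_{y^*}}\tau\le\gamma_0\le\Delta_{\mathrm{bin}}(\bar p_y)-6\tau.$$ For step size $\eta$ with $|\eta|\in(0,1]$ take $|\rho|=\kappa\sqrt{|\eta|}$, set $\eta'=\eta\mu$ and $\tilde\rho^{\,t}=\rho\sqrt\mu/\|{\bm g}^t\|$ ($0$ if ${\bm g}^t=0$), and assume the sign condition $\eta'\tilde\rho^{\,t}>0$. With $F({\bm W})=f({\bm W}\phi,{\bm y})$, define ${\bm W}^{t+1}(\mathrm{GD})={\bm W}^t-\eta\nabla F({\bm W}^t)$, ${\bm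 W}^{t+1}(\mathrm{SAM})={\bm W}^t-\eta\nabla F({\bm W}^t+\rho\nabla F({\bm W}^t)/\|\nabla F({\bm W}^t)\|)$, and $\alpha_i^{(a)}=p_i^{t+1}(a)/p_i^t$ with ${\bm p}^{t+1}(a)=\mathrm{softmax}({\bm W}^{t+1}(a)\phi)$. Then there exists $\eta_0>0$, depending only on $({\bm p}^t,{\bm H}^t_{{\bm z}},\|{\bm g}^t\|,\mu,\kappa,L,\gamma_0)$, such that for all $0<|\eta|\le\eta_0$, $$\alpha^{\mathrm{SAM}}_y\ge\alpha^{\mathrm{GD}}_y.$$ Moreover the inequality is strict whenever $\tilde\rho^{\,t}\neq0$ and $p^t_{y^*}\in(0,1)$, and equality holds when $\tilde\rho^{\,t}=0$.
   Context: $\|\cdot\|$ is Euclidean/Frobenius norm; $\nabla F({\bm W})=({\bm p}({\bm W}\phi)-{\bm y})\phi^\top$. $\alpha_i$ is the one-step confidence ratio of class $i$. *)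

(* Defs.v *)
From HB Require Import structures.
From mathcomp Require Import all_boot all_order all_algebra.
From mathcomp Require Import all_classical all_reals.
From mathcomp Require Import sequences exp.
Set Implicit Arguments. Unset Strict Implicit. Unset Printing Implicit Defensive.
Import Order.TTheory GRing.Theory Num.Theory.
Local Open Scope ring_scope.

Section Defs.
Variables (R : realType) (V d : nat).

Definition softmax (z : 'cV[R]_V) : 'cV[R]_V :=
  \col_i (expR (z i 0) / \sum_(j < V) expR (z j 0)).

Definition onehot (y : 'I_V) : 'cV[R]_V := \col_i (i == y)%:R.

Definition fnorm m n (A : 'M[R]_(m, n)) : R :=
  Num.sqrt (\sum_(i < m) \sum_(j < n) A i j ^+ 2).

(* gradient of F(W) = f(W phi, e_y):  (p(W phi) - e_y) phi^T *)
Definition gradF (phi : 'cV[R]_d) (y : 'I_V) (W : 'M[R]_(V, d)) : 'M[R]_(V, d) :=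
  (softmax (W *m phi) - onehot y) *m phi^T.

Definition gd_step (eta : R) phi y (W : 'M[R]_(V, d)) : 'M[R]_(V, d) :=
  W - eta *: gradF phi y W.

Definition sam_step (eta rho : R) phi y (W : 'M[R]_(V, d)) : 'M[R]_(V, d) :=
  W - eta *: gradF phi y (W + (rho / fnorm (gradF phi y W)) *: gradF phi y W).

Definition alpha (phi : 'cV[R]_d) (W Wnext : 'M[R]_(V, d)) (i : 'I_V) : R :=
  softmax (Wnext *m phi) i 0 / softmax (W *m phi) i 0.

Definition rho_tilde (rho mu : R) (g : 'cV[R]_V) : R :=
  if g == 0 then 0 else rho * Num.sqrt mu / fnorm g.

End Defs.

Definition Delta_bin (R : realType) (q : R) : R := 4 * q * (1 - q) ^+ 2.

(* Main.v *)
Require Import Defs.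
From HB Require Import structures.
From mathcomp Require Import all_boot all_order all_algebra.
From mathcomp Require Import all_classical all_reals.
From mathcomp Require Import sequences exp.
From mathcomp Require Import ring lra.
Import Order.TTheory GRing.Theory Num.Theory.
Local Open Scope ring_scope.

Section Core.
Variable R : realType.

Lemma exp_upper (x : R) : x <= 1/2 -> expR x <= 1 + x + 2 * x^+2.
Proof.
move=> hx.
have h := expR_ge1Dx (- x).
have hpos : 0 < 1 - x by lra.
have -> : expR x = (expR (- x))^-1 by rewrite expRN invrK.
have h1 : (expR (- x))^-1 <= (1 - x)^-1.
  by rewrite lef_pV2 ?posrE ?expR_gt0 //; lra.
apply: (le_trans h1).
rewrite -[(1 - x)^-1]mul1r ler_pdivrMr //.
have : 0 <= x^+2 * (1 - 2 * x) by apply: mulr_ge0; [exact: sqr_ge0 | lra].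
move=> H; nra.
Qed.

Lemma exp_mono_prod (r u v : R) : 0 <= (u - v) * (r * (expR (r*u) - expR (r*v))).
Proof.
have -> : (u - v) * (r * (expR (r*u) - expR (r*v))) = (r*u - r*v) * (expR (r*u) - expR (r*v)) by ring.
case: (lerP (r*u) (r*v)) => h.
  apply: mulr_le0; first lra.
  by rewrite subr_le0 ler_expR.
apply: mulr_ge0; first lra.
by rewrite subr_ge0 ler_expR ltW.
Qed.

Lemma exp_gap (r u v : R) : v <= u -> `|r*u| <= 1/2 -> `|r*v| <= 1/2 ->
  r^+2 * (u - v) / 2 <= r * (expR (r*u) - expR (r*v)).
Proof.
move=> huv hu hv.
move: hu hv; rewrite !ler_norml => /andP[hu1 hu2] /andP[hv1 hv2].
have e1 : expR (r*u) = expR (r*v) * expR (r*u - r*v) by rewrite -expRD; congr expR; ring.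
have e2 : expR (r*v) = expR (r*u) * expR (r*v - r*u) by rewrite -expRD; congr expR; ring.
have g1 := expR_ge1Dx (r*u - r*v).
have g2 := expR_ge1Dx (r*v - r*u).
have f1 := expR_ge1Dx (r*u).
have f2 := expR_ge1Dx (r*v).
have p1 := expR_gt0 (r*u).
have p2 := expR_gt0 (r*v).
set A := expR (r*u) in e1 e2 f1 p1 *.
set B := expR (r*v) in e1 e2 f2 p2 *.
case: (lerP 0 r) => hr.
  have k1 : A - B >= B * (r * (u - v)).
    rewrite e1; have : B * (1 + (r*u - r*v)) <= B * expR (r*u - r*v) by rewrite ler_pM2l.
    lra.
  have k2 : r * (A - B) >= r * (B * (r * (u - v))) by rewrite ler_wpM2l.
  have k3 : 0 <= (B - 1/2) * (r^+2 * (u - v)).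
    apply: mulr_ge0; first lra. apply: mulr_ge0; [exact: sqr_ge0|lra].
  nra.
have k1 : B - A >= A * (- r * (u - v)).
  rewrite e2; have : A * (1 + (r*v - r*u)) <= A * expR (r*v - r*u) by rewrite ler_pM2l.
  lra.
have k2 : - r * (B - A) >= - r * (A * (- r * (u - v))) by rewrite ler_wpM2l //; lra.
have k3 : 0 <= (A - 1/2) * (r^+2 * (u - v)).
  apply: mulr_ge0; first lra. apply: mulr_ge0; [exact: sqr_ge0|lra].
nra.
Qed.

End Core.
Section Sums.
Variables (R : realType) (V : nat).

Lemma sum_delta (F : 'I_V -> R) (y : 'I_V) : \sum_j (j == y)%:R * F j = F y.
Proof.
rewrite (bigD1 y) //= eqxx mul1r big1 ?addr0 // => j /negbTE ->; by rewrite mul0r.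
Qed.

Lemma pair_id (p g h : 'I_V -> R) : \sum_j p j = 1 ->
  \sum_j p j * (g j - \sum_k p k * g k) * h j =
  (1/2) * \sum_i \sum_j p i * p j * (g i - g j) * (h i - h j).
Proof.
move=> hs.
set m := \sum_k p k * g k.
set H := \sum_k p k * h k.
set G3 := \sum_k p k * g k * h k.
have E : forall i, \sum_j p i * p j * (g i - g j) * (h i - h j) =
   p i * g i * h i * (\sum_j p j) - p i * g i * H - p i * h i * m + p i * G3.
  move=> i; rewrite /H /m /G3 !mulr_sumr -!sumrB -big_split; apply: eq_bigr => j _ /=; ring.
have -> : \sum_i \sum_j p i * p j * (g i - g j) * (h i - h j)
   = G3 - m * H - H * m + G3 * 1.
  under eq_bigr do rewrite E hs mulr1.
  rewrite big_split /= !sumrB -!mulr_suml hs /G3 /m /H; ring.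
have -> : \sum_j p j * (g j - m) * h j = G3 - m * H.
  rewrite /G3 /H mulr_sumr -sumrB; apply: eq_bigr => j _; ring.
by field.
Qed.

End Sums.

Section Main.
Variables (R : realType) (V : nat).

Lemma core (p g h q gt : 'I_V -> R) (y : 'I_V) (r c Z : R) :
 (forall j, 0 < p j) -> \sum_j p j = 1 ->
 (forall j, g j = p j - (j == y)%:R) ->
 (forall j, h j = expR (r * g j)) ->
 Z = \sum_j p j * h j ->
 (forall j, q j = p j * h j / Z) ->
 (forall j, gt j = q j - (j == y)%:R) ->
 0 < c * r -> `|c| <= 1/4 -> `|r| <= 1/2 ->
 16 * `|c| < `|r| * (p y * (1 - p y)^+3 / 4) ->
 \sum_j p j * expR (- c * (gt j - gt y)) < \sum_j p j * expR (- c * (g j - g y)).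
Proof.
move=> hp hs hg hh hZ hq hgt hcr hc hr hcond.
have hp1 : forall j, p j <= 1.
  move=> j; rewrite -hs (bigD1 j) //= lerDl; apply: sumr_ge0 => k _; exact: ltW.
have hgb : forall j, `|g j| <= 1.
  move=> j; rewrite hg ler_norml; have := hp j; have := hp1 j.
  by case: (j == y) => /= a b; apply/andP; split; lra.
have hrg : forall j, `|r * g j| <= 1/2.
  move=> j; rewrite normrM; have := hgb j; have := normr_ge0 (g j); have := normr_ge0 r.
  move=> a b c1; nra.
have hh0 : forall j, 0 < h j by move=> j; rewrite hh expR_gt0.
have hh2 : forall j, h j <= 2.
  move=> j; rewrite hh; have := hrg j; rewrite ler_norml => /andP[a b].
  have := @exp_upper _ _ b; have : (r * g j)^+2 <= 1/4.
    have e := hrg j; have e0 := normr_ge0 (r * g j).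
    rewrite -(real_normK (num_real _)); nra.
  lra.
have hZpos : 0 < Z.
  rewrite hZ (bigD1 y) //=; have : 0 <= \sum_(j | j != y) p j * h j.
    by apply: sumr_ge0 => j _; apply: mulr_ge0; apply: ltW.
  have : 0 < p y * h y by apply: mulr_gt0.
  lra.
have hZ2 : Z <= 2.
  rewrite hZ; apply: (@le_trans _ _ (\sum_j p j * 2)).
    by apply: ler_sum => j _; rewrite ler_pM2l.
  by rewrite -mulr_suml hs mul1r.
have hZ0 : Z != 0 by rewrite gt_eqF.
have qZ : forall j, q j * Z = p j * h j by move=> j; rewrite hq divfK.
have hq0 : forall j, 0 <= q j.
  by move=> j; rewrite hq; apply: divr_ge0; [apply: mulr_ge0; apply: ltW | apply: ltW].
have hq1 : forall j, q j <= 1.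
  move=> j; rewrite hq ler_pdivrMr // mul1r hZ (bigD1 j) //= lerDl.
  by apply: sumr_ge0 => k _; apply: mulr_ge0; apply: ltW.
have hud : forall j, `|gt j - gt y| <= 2.
  move=> j; rewrite !hgt eqxx ler_norml; have := hq0 j; have := hq1 j;
  have := hq0 y; have := hq1 y.
  by case: (j == y) => /= a b c1 d; apply/andP; split; lra.
set E := \sum_j p j * ((gt j - gt y) - (g j - g y)).
have hT : c * E - 8 * c^+2 <=
    \sum_j p j * expR (- c * (g j - g y)) - \sum_j p j * expR (- c * (gt j - gt y)).
  rewrite -sumrB.
  have -> : c * E - 8 * c^+2 = \sum_j (c * (p j * ((gt j - gt y) - (g j - g y))) - 8 * c^+2 * p j).
    by rewrite sumrB -!mulr_sumr hs mulr1.
  apply: ler_sum => j _.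
  have e1 := expR_ge1Dx (- c * (g j - g y)).
  have hu := hud j.
  have hu0 := normr_ge0 (gt j - gt y).
  have hc0 := normr_ge0 c.
  have hsq : (gt j - gt y)^+2 <= 4.
    rewrite -(real_normK (num_real _)); nra.
  have hx : - c * (gt j - gt y) <= 1/2.
    apply: (le_trans (ler_norm _)); rewrite normrM normrN; nra.
  have e2 := @exp_upper _ _ hx.
  have hd : c * ((gt j - gt y) - (g j - g y)) - 8 * c^+2 <=
      expR (- c * (g j - g y)) - expR (- c * (gt j - gt y)).
    have : c^+2 * (gt j - gt y)^+2 <= c^+2 * 4 by rewrite ler_wpM2l ?sqr_ge0.
    have : (- c * (gt j - gt y))^+2 = c^+2 * (gt j - gt y)^+2 by ring.
    lra.
  have := ler_wpM2l (ltW (hp j)) hd.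
  lra.
have hE : E = \sum_j p j * q j - \sum_j p j * p j - (q y - p y).
  rewrite /E (eq_bigr (fun j => p j * q j - p j * p j - p j * (q y - p y))); last first.
    by move=> j _; rewrite !hgt !hg eqxx; ring.
  by rewrite !sumrB -mulr_suml hs mul1r.
have hm : \sum_k p k * g k = \sum_k p k * p k - p y.
  rewrite (eq_bigr (fun k => p k * p k - (k == y)%:R * p k)).
    by rewrite sumrB (@sum_delta _ _ p y).
  by move=> k _; rewrite hg; ring.
set m := \sum_k p k * g k.
have hR : \sum_j p j * (g j - m) * h j = \sum_j p j * p j * h j - p y * h y - m * Z.
  rewrite (eq_bigr (fun j => p j * p j * h j - (j == y)%:R * (p j * h j) - m * (p j * h j))).
    by rewrite !sumrB (@sum_delta _ _ (fun j => p j * h j) y) -mulr_sumr -hZ.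
  by move=> j _; rewrite hg; ring.
have hpq : (\sum_j p j * q j) * Z = \sum_j p j * p j * h j.
  by rewrite mulr_suml; apply: eq_bigr => j _; rewrite -mulrA qZ; ring.
have hEZ : E * Z = \sum_j p j * (g j - m) * h j.
  rewrite hR hE.
  have -> : (\sum_j p j * q j - \sum_j p j * p j - (q y - p y)) * Z =
     (\sum_j p j * q j) * Z - (\sum_j p j * p j) * Z - (q y * Z - p y * Z) by ring.
  rewrite hpq qZ /m hm; ring.
pose T i j := p i * p j * ((g i - g j) * (r * (h i - h j))).
have hrEZ : r * (E * Z) = 1/2 * \sum_i \sum_j T i j.
  rewrite hEZ /m pair_id // mulrCA; congr (_ * _).
  rewrite mulr_sumr; apply: eq_bigr => i _; rewrite mulr_sumr; apply: eq_bigr => j _.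
  rewrite /T; ring.
have hT0 : forall i j, 0 <= T i j.
  move=> i j; rewrite /T; apply: mulr_ge0; first by apply: mulr_ge0; apply: ltW.
  rewrite !hh; exact: exp_mono_prod.
set K := (1 - p y)^+2 * r^+2 / 2.
have hrow : forall j, p y * K * (p j - (j == y)%:R * p y) <= T y j.
  move=> j; rewrite /T; case: (eqVneq j y) => [->|hjy].
    by rewrite (_ : (true%:R : R) = 1) // mul1r !subrr !mulr0. 
  rewrite (_ : (false%:R : R) = 0) // mul0r subr0.
  have hgy : g y = p y - 1 by rewrite hg eqxx.
  have hgj : g j = p j by rewrite hg (negbTE hjy) subr0.
  have hvu : g y <= g j by rewrite hgy hgj; have := hp j; have := hp1 y; lra.
  have hgap := @exp_gap _ _ _ _ hvu (hrg j) (hrg y).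
  rewrite -!hh in hgap.
  have hpy1 := hp1 y.
  have hd : 1 - p y <= g j - g y by rewrite hgy hgj; have := hp j; lra.
  have hd0 : 0 <= 1 - p y by lra.
  have h1 : (g j - g y) * (r^+2 * (g j - g y) / 2) <= (g j - g y) * (r * (h j - h y)).
    by rewrite ler_wpM2l //; lra.
  have h2 : (1 - p y)^+2 <= (g j - g y)^+2 by rewrite ler_pXn2r // nnegrE; lra.
  have h3 : K <= (g y - g j) * (r * (h y - h j)).
    have -> : (g y - g j) * (r * (h y - h j)) = (g j - g y) * (r * (h j - h y)) by ring.
    apply: le_trans h1; rewrite /K.
    have := ler_wpM2r (sqr_ge0 r) h2 => h4.
    have -> : (g j - g y) * (r ^+ 2 * (g j - g y) / 2) = (g j - g y)^+2 * r^+2 / 2 by ring.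
    lra.
  have hpp : 0 <= p y * p j by apply: mulr_ge0; apply: ltW.
  have := ler_wpM2l hpp h3; lra.
have hsumT : p y * K * (1 - p y) <= \sum_i \sum_j T i j.
  apply: (@le_trans _ _ (\sum_j T y j)).
    apply: (@le_trans _ _ (\sum_j p y * K * (p j - (j == y)%:R * p y))).
      by rewrite -mulr_sumr sumrB hs (@sum_delta _ _ (fun _ => p y) y).
    by apply: ler_sum => j _; exact: hrow.
  rewrite [X in _ <= X](bigD1 y) //= lerDl.
  by apply: sumr_ge0 => i _; apply: sumr_ge0 => j _; exact: hT0.
set a0 := p y * (1 - p y)^+3 / 4.
have hra : r^+2 * a0 <= r * (E * Z).
  rewrite hrEZ; have : r^+2 * a0 = 1/2 * (p y * K * (1 - p y)) by rewrite /a0 /K; field.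
  move=> ->; lra.
have hc0 : c != 0 by apply/eqP => e; move: hcr; rewrite e mul0r ltxx.
have hr0 : r != 0 by apply/eqP => e; move: hcr; rewrite e mulr0 ltxx.
have hcp : 0 < `|c| by rewrite normr_gt0.
have hrp : 0 < `|r| by rewrite normr_gt0.
have ha0 : 0 < a0.
  move: hcond; rewrite -/a0 => hcond.
  rewrite ltNge; apply/negP => ha.
  have : `|r| * a0 <= 0 by rewrite pmulr_rle0.
  lra.
have hr2 : 0 < r^+2 by rewrite exprn_even_gt0.
have hcEZ : c * r * a0 <= c * E * Z.
  have h1 := ler_wpM2l (ltW hcr) hra.
  have : r^+2 * (c * r * a0) <= r^+2 * (c * E * Z).
    have -> : r^+2 * (c * r * a0) = c * r * (r^+2 * a0) by ring.
    have -> : r^+2 * (c * E * Z) = c * r * (r * (E * Z)) by ring.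
    exact: h1.
  by rewrite ler_pM2l.
have hcra : 0 < c * r * a0 by apply: mulr_gt0.
have hcE : c * r * a0 / 2 <= c * E.
  have : c * r * a0 / 2 * Z <= c * E * Z.
    apply: le_trans hcEZ.
    have : c * r * a0 / 2 * Z <= c * r * a0 / 2 * 2 by rewrite ler_wpM2l //; lra.
    lra.
  by rewrite ler_pM2r.
have hcrn : c * r = `|c| * `|r| by rewrite -normrM gtr0_norm.
have hc2 : c^+2 = `|c| * `|c| by rewrite -expr2 real_normK // num_real.
have : 8 * c^+2 < c * r * a0 / 2.
  rewrite hcrn hc2; move: hcond; rewrite -/a0 => hcond.
  have := ltr_pM2l hcp; move=> e.
  have : `|c| * (16 * `|c|) < `|c| * (`|r| * a0) by rewrite ltr_pM2l.
  lra.
lra.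
Qed.

End Main.
Section Mat.
Variables (R : realType) (V d : nat).

Lemma sumexp_gt0 (z : 'cV[R]_V) (j : 'I_V) : 0 < \sum_k expR (z k 0).
Proof.
rewrite (bigD1 j) //=; apply: ltr_pwDl; first exact: expR_gt0.
by apply: sumr_ge0 => k _; apply: ltW; exact: expR_gt0.
Qed.

Lemma softmax_gt0 (z : 'cV[R]_V) j : 0 < softmax z j 0.
Proof. by rewrite mxE; apply: divr_gt0; [exact: expR_gt0 | exact: sumexp_gt0 j]. Qed.

Lemma softmax_sum (z : 'cV[R]_V) (j : 'I_V) : \sum_k softmax z k 0 = 1.
Proof.
under eq_bigr do rewrite mxE.
by rewrite -mulr_suml divff // gt_eqF // (sumexp_gt0 z j).
Qed.

Lemma softmax_shift (z z' : 'cV[R]_V) (w : 'I_V -> R) :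
  (forall j, z' j 0 = z j 0 + w j) ->
  forall j, softmax z' j 0 = softmax z j 0 * expR (w j) / \sum_k softmax z k 0 * expR (w k).
Proof.
move=> hz j.
have hS := sumexp_gt0 z j.
rewrite !mxE.
under [X in _ = _ / X]eq_bigr do rewrite mxE.
rewrite hz expRD.
under [X in _ / X = _]eq_bigr do rewrite hz expRD.
set S := \sum_k expR (z k 0).
set S' := \sum_k expR (z k 0) * expR (w k).
have -> : \sum_i expR (z i 0) / S * expR (w i) = S' / S.
  by rewrite /S' mulr_suml; apply: eq_bigr => i _; rewrite mulrAC.
have hS' : 0 < S'.
  rewrite /S' (bigD1 j) //=; apply: ltr_pwDl; first by apply: mulr_gt0; exact: expR_gt0.
  by apply: sumr_ge0 => k _; apply: ltW; apply: mulr_gt0; exact: expR_gt0.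
field; apply/andP; split; exact: lt0r_neq0.
Qed.

Lemma alpha_shift (z z' : 'cV[R]_V) (w : 'I_V -> R) (y : 'I_V) :
  (forall j, z' j 0 = z j 0 + w j) ->
  softmax z' y 0 / softmax z y 0 = (\sum_k softmax z k 0 * expR (w k - w y))^-1.
Proof.
move=> hz; rewrite (softmax_shift _ _ _ hz y).
have hp := softmax_gt0 z y.
have -> : \sum_k softmax z k 0 * expR (w k - w y) =
   (\sum_k softmax z k 0 * expR (w k)) / expR (w y).
  rewrite mulr_suml; apply: eq_bigr => k _; rewrite expRD expRN; ring.
have hS' : 0 < \sum_k softmax z k 0 * expR (w k).
  rewrite (bigD1 y) //=; apply: ltr_pwDl; first by apply: mulr_gt0 => //; exact: expR_gt0.
  by apply: sumr_ge0 => k _; apply: ltW; apply: mulr_gt0; [exact: softmax_gt0|exact: expR_gt0].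
have := expR_gt0 (w y) => he.
field; rewrite !lt0r_neq0 //.
Qed.

Lemma fnorm_sq m n (A : 'M[R]_(m, n)) : fnorm A ^+ 2 = \sum_i \sum_j A i j ^+ 2.
Proof.
rewrite /fnorm sqr_sqrtr //; apply: sumr_ge0 => i _; apply: sumr_ge0 => j _; exact: sqr_ge0.
Qed.

Lemma fnorm_ge0 m n (A : 'M[R]_(m, n)) : 0 <= fnorm A.
Proof. exact: sqrtr_ge0. Qed.

Lemma entry_step (W : 'M[R]_(V, d)) (phi : 'cV[R]_d) (v : 'cV[R]_V) (a : R) i :
  ((W + a *: (v *m phi^T)) *m phi) i 0 = (W *m phi) i 0 + a * (v i 0 * fnorm phi ^+ 2).
Proof.
rewrite mulmxDl -scalemxAl -mulmxA mxE [in LHS]mxE mxE; congr (_ + _ * _); first by rewrite mxE.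
rewrite fnorm_sq mxE big_ord1 mxE mulr_sumr [RHS]mulr_sumr; apply: eq_bigr => k _.
rewrite big_ord_recl big_ord0 addr0 !mxE; ring.
Qed.

Lemma fnorm_outer (v : 'cV[R]_V) (phi : 'cV[R]_d) :
  fnorm (v *m phi^T) = fnorm v * fnorm phi.
Proof.
rewrite /fnorm -sqrtrM; last by apply: sumr_ge0 => i _; apply: sumr_ge0 => j _; exact: sqr_ge0.
congr Num.sqrt; rewrite big_distrl /=; apply: eq_bigr => i _.
rewrite big_ord1 big_distrr /=; apply: eq_bigr => j _.
by rewrite big_ord1 !mxE big_ord1 mxE; ring.
Qed.

End Mat.


Lemma inv_lt (R : realType) (a b : R) : 0 < a -> 0 < b -> a < b -> b^-1 < a^-1.
Proof. by move=> ha hb hab; rewrite ltf_pV2 // posrE. Qed.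

Lemma aux1 (R : realType) (k e m n : R) : 0 <= e -> 0 < m ->
  e * (4 * (k^+2 + 1) * m) <= n -> k^+2 * e * m <= 1/4 * n.
Proof.
move=> he hm h; have : 0 <= e * m by apply: mulr_ge0 => //; apply: ltW.
nra.
Qed.

Lemma aux2 (R : realType) (x : R) : x^+2 <= 1/4 -> `|x| <= 1/2.
Proof. rewrite -(real_normK (num_real x)); have := normr_ge0 x; nra. Qed.

Lemma aux3 (R : realType) (u v : R) : 0 <= u -> 0 <= v -> u^+2 < v^+2 -> u < v.
Proof. move=> hu hv h; nra. Qed.

Lemma aux4 (R : realType) (X K : R) : X <= K -> 0 < K -> X / 2 < K.
Proof. move=> h1 h2; lra. Qed.

Theorem corollary5 (R : realType) (V d : nat) (hV : (2 <= V)%N) :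
  exists eta0 : 'I_V -> 'cV[R]_V -> R -> R -> R -> R,
  forall (phi : 'cV[R]_d) (y ystar : 'I_V) (W : 'M[R]_(V, d)) (kappa gamma0 : R),
  let mu := fnorm phi ^+ 2 in
  let p := softmax (W *m phi) in
  let g := p - onehot R y in
  let S := p y 0 + p ystar 0 in
  let tau := 1 - S in
  let pbar := p y 0 / S in
  0 < mu -> 0 <= kappa ->
  ystar != y -> (forall j, j != y -> p j 0 <= p ystar 0) ->
  0 < gamma0 ->
  4 * Num.sqrt 2 * expR 1 ^+ 2 / p ystar 0 * tau <= gamma0 ->
  gamma0 <= Delta_bin pbar - 6 * tau ->
  0 < eta0 y p mu kappa gamma0 /\
  forall eta rho : R,
    0 < `|eta| -> `|eta| <= 1 -> `|eta| <= eta0 y p mu kappa gamma0 ->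
    `|rho| = kappa * Num.sqrt `|eta| ->
    let rt := rho_tilde rho mu g in
    let aG := alpha phi W (gd_step eta phi y W) y in
    let aS := alpha phi W (sam_step eta rho phi y W) y in
    (0 < eta * mu * rt -> aG <= aS) /\
    (0 < eta * mu * rt -> rt != 0 -> 0 < p ystar 0 < 1 -> aG < aS) /\
    (rt = 0 -> aS = aG).
Proof.
exists (fun y p mu kappa _ =>
  Num.min (1 / (4 * mu)) (Num.min (fnorm (p - onehot R y) ^+ 2 / (4 * (kappa^+2 + 1) * mu))
     (if kappa == 0 then 1 else
        kappa^+2 * (p y 0 * (1 - p y 0)^+3 / 4)^+2 / (512 * mu * fnorm (p - onehot R y) ^+ 2)))).
move=> phi y ystar W kappa gamma0 mu p g S tau pbar hmu hk hys hmax hg0 _ _.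
have hp : forall j, 0 < p j 0 by move=> j; exact: softmax_gt0.
have hs : \sum_j p j 0 = 1 by exact: softmax_sum.
have hpy1 : p y 0 < 1.
  rewrite -hs (bigD1 y) //= ltrDl (bigD1 ystar hys) /=.
  apply: ltr_pwDl; first exact: hp.
  by apply: sumr_ge0 => j _; exact: ltW.
have hpy0 := hp y.
have hgj : forall j, g j 0 = p j 0 - (j == y)%:R by move=> j; rewrite !mxE.
have hgy : g y ord0 = p y 0 - 1 by rewrite !mxE eqxx.
set n := fnorm g ^+ 2.
have hn : 0 < n.
  rewrite /n fnorm_sq (bigD1 y) //= big_ord_recl big_ord0 addr0.
  have : 0 < g y ord0 ^+ 2 by rewrite exprn_even_gt0 // hgy subr_eq0 (lt_eqF hpy1).
  have : 0 <= \sum_(i | i != y) \sum_j g i j ^+ 2.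
    by apply: sumr_ge0 => i _; apply: sumr_ge0 => j _; exact: sqr_ge0.
  lra.
set a0 := p y 0 * (1 - p y 0)^+3 / 4.
have ha0 : 0 < a0.
  rewrite /a0; apply: divr_gt0 => //; apply: mulr_gt0 => //; apply: exprn_gt0; lra.
split.
  rewrite /= !lt_min; apply/andP; split.
    by apply: divr_gt0 => //; apply: mulr_gt0.
  apply/andP; split.
    apply: divr_gt0 => //; apply: mulr_gt0 => //; apply: mulr_gt0 => //.
    by apply: ltr_wpDl; [exact: sqr_ge0|].
  case: eqP => hk0 //.
  apply: divr_gt0; last by apply: mulr_gt0 => //; apply: mulr_gt0.
  apply: mulr_gt0; first by rewrite exprn_even_gt0 //; apply/eqP.
  exact: exprn_gt0.
move=> eta rho he0 he1 heta hrho rt aG aS.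
move: heta; rewrite /= -/g -/n -/a0 !le_min => /andP[h1 /andP[h2 h3]].
have hphi : 0 < fnorm phi.
  have := @fnorm_ge0 _ _ _ phi; rewrite le0r => /orP[/eqP Hz|//]; move: hmu; rewrite /mu Hz expr0n /= ltxx.
  by [].
have hng : 0 < fnorm g.
  have := @fnorm_ge0 _ _ _ g; rewrite le0r => /orP[/eqP Hz|//]; move: hn; rewrite /n Hz expr0n /= ltxx.
  by [].
have hgnz : g != 0.
  apply/eqP => e; have := congr1 (fun M : 'cV[R]_V => M y ord0) e.
  have z0 : (0 : 'cV[R]_V) y ord0 = 0 by rewrite mxE.
  rewrite hgy z0 => e'; lra.
have hrt : rt = rho * fnorm phi / fnorm g.
  by rewrite /rt /rho_tilde (negbTE hgnz) /mu sqrtr_sqr ger0_norm // fnorm_ge0.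
set z := W *m phi.
have hzG : forall i, (gd_step eta phi y W *m phi) i 0 = z i 0 + (- eta) * (g i 0 * mu).
  by move=> i; rewrite /gd_step -scaleNr; exact: entry_step.
set Wt := W + (rho / fnorm (gradF phi y W)) *: gradF phi y W.
have hzt : forall i, (Wt *m phi) i 0 = z i 0 + rt * g i 0.
  move=> i; rewrite /Wt entry_step; congr (_ + _).
  rewrite /gradF fnorm_outer -/p -/g hrt /mu; field.
  by rewrite !gt_eqF.
set q := softmax (Wt *m phi).
have hq := @softmax_shift _ _ _ _ _ hzt.
set gt := q - onehot R y.
have hzS : forall i, (sam_step eta rho phi y W *m phi) i 0 = z i 0 + (- eta) * (gt i 0 * mu).
  by move=> i; rewrite /sam_step -scaleNr; exact: entry_step.
set Tu := \sum_k p k 0 * expR (- (eta * mu) * (g k 0 - g y 0)).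
set Tt := \sum_k p k 0 * expR (- (eta * mu) * (gt k 0 - gt y 0)).
have haG : aG = Tu^-1.
  rewrite /aG /alpha (@alpha_shift _ _ _ _ _ y hzG); congr (_^-1).
  by apply: eq_bigr => k _; congr (_ * expR _); ring.
have haS : aS = Tt^-1.
  rewrite /aS /alpha (@alpha_shift _ _ _ _ _ y hzS); congr (_^-1).
  by apply: eq_bigr => k _; congr (_ * expR _); ring.
have hTt : 0 < Tt.
  rewrite /Tt (bigD1 y) //=; apply: ltr_pwDl; first by apply: mulr_gt0; [exact: hp | exact: expR_gt0].
  by apply: sumr_ge0 => k _; apply: ltW; apply: mulr_gt0; [exact: hp | exact: expR_gt0].
have hTu : 0 < Tu.
  rewrite /Tu (bigD1 y) //=; apply: ltr_pwDl; first by apply: mulr_gt0; [exact: hp | exact: expR_gt0].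
  by apply: sumr_ge0 => k _; apply: ltW; apply: mulr_gt0; [exact: hp | exact: expR_gt0].
have key : 0 < eta * mu * rt -> Tt < Tu.
  move=> hpos.
  have hrtnz : rt != 0 by apply/eqP => E1; move: hpos; rewrite E1 mulr0 ltxx.
  have hk0 : kappa != 0.
    apply/eqP => E1; move: hrtnz; rewrite hrt.
    have : rho = 0 by apply/eqP; rewrite -normr_eq0 hrho E1 mul0r.
    by move=> ->; rewrite !mul0r eqxx.
  have hkp : 0 < kappa by rewrite lt0r hk0.
  have hmuE : `|eta * mu| = `|eta| * mu by rewrite normrM (gtr0_norm hmu).
  have hc : `|eta * mu| <= 1/4.
    rewrite hmuE; have := ler_wpM2r (ltW hmu) h1.
    have -> : 1 / (4 * mu) * mu = 1/4 by field; rewrite gt_eqF.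
    done.
  have hrho2 : rho^+2 = kappa^+2 * `|eta|.
    by rewrite -real_normK ?num_real // hrho exprMn sqr_sqrtr // normr_ge0.
  have hrt2 : rt^+2 * n = kappa^+2 * `|eta| * mu.
    rewrite hrt /n /mu -hrho2; field; by rewrite gt_eqF.
  have hr : `|rt| <= 1/2.
    have h2' : `|eta| * (4 * (kappa^+2 + 1) * mu) <= n.
      by rewrite -ler_pdivlMr // mulr_gt0 // mulr_gt0 // ltr_wpDl // sqr_ge0.
    have hq2 : rt^+2 <= 1/4.
      have : rt^+2 * n <= 1/4 * n.
        by rewrite hrt2; apply: aux1 => //; exact: normr_ge0.
      by rewrite ler_pM2r.
    exact: aux2.
  have hcond : 16 * `|eta * mu| < `|rt| * a0.
    move: h3; rewrite (negbTE hk0) => h3.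
    have h3' : `|eta| * (512 * mu * n) <= kappa^+2 * a0^+2.
      by rewrite -ler_pdivlMr // mulr_gt0 // mulr_gt0.
    set A := `|eta| * mu.
    have hA : 0 < A by apply: mulr_gt0.
    have hk2 : 0 < kappa^+2 * a0^+2 by apply: mulr_gt0; apply: exprn_gt0.
    have s1 : (16 * A)^+2 * n < (`|rt| * a0)^+2 * n.
      have -> : (`|rt| * a0)^+2 * n = A * (kappa^+2 * a0^+2).
        by rewrite exprMn real_normK ?num_real // mulrAC hrt2 /A; ring.
      have -> : (16 * A)^+2 * n = A * (256 * (`|eta| * mu * n)) by rewrite /A; ring.
      rewrite ltr_pM2l //.
      have : 256 * (`|eta| * mu * n) = (`|eta| * (512 * mu * n)) / 2 by field.
      by move=> ->; apply: aux4.
    rewrite ltr_pM2r // in s1.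
    rewrite hmuE -/A.
    apply: aux3 => //; first by apply: mulr_ge0 => //; apply: ltW.
    by apply: mulr_ge0 => //; apply: ltW.
  have hgtj : forall j, gt j 0 = q j 0 - (j == y)%:R.
    by move=> j; rewrite /gt mxE; congr (_ + _); rewrite !mxE.
  have := @core _ _ (fun j => p j 0) (fun j => g j 0) (fun j => expR (rt * g j 0))
    (fun j => q j 0) (fun j => gt j 0) y rt (eta * mu) (\sum_k p k 0 * expR (rt * g k 0))
    hp hs hgj (fun j => erefl) erefl hq hgtj hpos hc hr.
  by rewrite -/a0; apply.
have strict : 0 < eta * mu * rt -> aG < aS.
  move=> hpos; have hkey := key hpos; rewrite haG haS.
  exact: inv_lt hTt hTu hkey.
split; first by move=> hpos; apply: ltW; exact: strict.
split; first by move=> hpos _ _; exact: strict.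
move=> hrt0.
have hrho0 : rho = 0.
  move: hrt0; rewrite hrt => /eqP; rewrite !mulf_eq0 invr_eq0 !(gt_eqF hphi) !(gt_eqF hng) !orbF.
  by move/eqP.
have hss : sam_step eta rho phi y W = gd_step eta phi y W.
  by rewrite /sam_step /gd_step hrho0 mul0r scale0r addr0.
by rewrite /aS /aG hss.
Qed.
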